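(* Let $\mathcal{F}$ be a compact (in the uniform norm) family of uniformly bounded real-valued Lipschitz functions on $[0,1]$ such that $\int_0^{1/2} f < \int_{1/2}^1 f$ for every $f \in \mathcal{F}$. Then there exist $M, \epsilon > 0$ such that for all integers $m > M$, all integers $m_* \in ((\frac{1}{2}-\epsilon)m, (\frac{1}{2}+\epsilon)m)$, and all $f \in \mathcal{F}$, $$\sum_{j=1}^{m_*} \frac{1}{\log^2(j+3)}f\left(\frac{j}{m}\right) < \sum_{j=m_*+1}^m \frac{1}{\log^2(j+3)}f\left(\frac{j}{m}\right).$$
   Context: $\log$ denotes the natural logarithm. *)

(* Defs.v *)
From Stdlib Require Import Reals List.
From Coquelicot Require Import Coquelicot.
Open Scope R_scope.

(* Real-valued functions on [0,1] are represented as total functions R -> R;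
   only their values on [0,1] matter. *)

(* [sum_from_to a b g] = g a + g (a+1) + ... + g b  (empty, i.e. 0, if b < a). *)
Definition sum_from_to (a b : nat) (g : nat -> R) : R :=
  fold_right Rplus 0 (map g (seq a (S b - a))).

Definition lipschitz01 (f : R -> R) : Prop :=
  exists L : R, forall x y : R, 0 <= x <= 1 -> 0 <= y <= 1 ->
    Rabs (f x - f y) <= L * Rabs (x - y).

(* Uniform (sup-norm on [0,1]) ball: sup_{x in [0,1]} |f x - g x| < r. *)
Definition unif_ball (f : R -> R) (r : R) (g : R -> R) : Prop :=
  exists r', r' < r /\ forall x : R, 0 <= x <= 1 -> Rabs (f x - g x) <= r'.

Definition unif_open (U : (R -> R) -> Prop) : Prop :=
  forall f, U f -> exists r, 0 < r /\ forall g, unif_ball f r g -> U g.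

Definition unif_compact (F : (R -> R) -> Prop) : Prop :=
  forall (I : Type) (U : I -> (R -> R) -> Prop),
    (forall i, unif_open (U i)) ->
    (forall f, F f -> exists i, U i f) ->
    exists l : list I, forall f, F f -> exists i, In i l /\ U i f.

Definition wsum (f : R -> R) (m a b : nat) : R :=
  sum_from_to a b (fun j => / (ln (INR j + 3)) ^ 2 * f (INR j / INR m)).

(* Main.v *)
Require Import Defs.
From Stdlib Require Import Reals List Lra Lia Classical.
From Coquelicot Require Import Coquelicot.
Open Scope R_scope.


Definition LS (l : list nat) (g : nat -> R) : R := fold_right Rplus 0 (map g l).

Lemma LS_le l g h : (forall j, In j l -> g j <= h j) -> LS l g <= LS l h.
Proof.
  unfold LS; induction l as [|a l IH]; simpl; intros H; [lra|]. assert (H1 := H a (or_introl eq_refl)).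
  assert (H2 : fold_right Rplus 0 (map g l) <= fold_right Rplus 0 (map h l)).
  { apply IH; intros; apply H; auto. } lra.
Qed.

Lemma LS_ext l g h : (forall j, In j l -> g j = h j) -> LS l g = LS l h.
Proof. intros H; apply Rle_antisym; apply LS_le; intros j Hj; rewrite H; auto; lra. Qed.

Lemma LS_plus l g h : LS l (fun j => g j + h j) = LS l g + LS l h.
Proof. induction l; unfold LS in *; simpl; [lra|]. rewrite IHl; lra. Qed.

Lemma LS_minus l g h : LS l (fun j => g j - h j) = LS l g - LS l h.
Proof. induction l; unfold LS in *; simpl; [lra|]. rewrite IHl; lra. Qed.

Lemma LS_scal l c g : LS l (fun j => c * g j) = c * LS l g.
Proof. induction l; unfold LS in *; simpl; [lra|]. rewrite IHl; lra. Qed.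

Lemma LS_const l c : LS l (fun _ => c) = INR (length l) * c.
Proof. induction l; unfold LS in *; cbn [length map fold_right]; [simpl; lra|]. rewrite IHl. rewrite S_INR; lra. Qed.

Lemma LS_app l1 l2 g : LS (l1 ++ l2) g = LS l1 g + LS l2 g.
Proof. induction l1; unfold LS in *; simpl; [lra|]. rewrite IHl1; lra. Qed.

Lemma LS_abs l g : Rabs (LS l g) <= LS l (fun j => Rabs (g j)).
Proof.
  induction l; unfold LS in *; simpl. rewrite Rabs_R0; lra.
  eapply Rle_trans; [apply Rabs_triang|]. lra.
Qed.

Lemma LS_nonneg l g : (forall j, In j l -> 0 <= g j) -> 0 <= LS l g.
Proof. intros H. replace 0 with (LS l (fun _ => 0)). apply LS_le; auto.
  rewrite LS_const; lra. Qed.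

Lemma sum_from_to_LS a b g : sum_from_to a b g = LS (seq a (S b - a)) g.
Proof. reflexivity. Qed.

Lemma LS_count m X c : 0 <= c -> 0 <= X ->
  LS (seq 1 m) (fun j => if Rlt_dec (INR j) X then c else 0) <= X * c.
Proof.
  intros Hc HX.
  assert (H : LS (seq 1 m) (fun j => if Rlt_dec (INR j) X then c else 0) <= INR m * c
           /\ LS (seq 1 m) (fun j => if Rlt_dec (INR j) X then c else 0) <= X * c).
  2: tauto.
  induction m as [|m IH].
  - unfold LS; simpl; split; nra.
  - replace (S m) with (m + 1)%nat by lia. rewrite seq_app, LS_app.
    replace (LS (seq (1 + m) 1) (fun j => if Rlt_dec (INR j) X then c else 0))
      with (if Rlt_dec (INR (1+m)) X then c else 0) by (unfold LS; simpl; ring).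
    destruct IH as [IH1 IH2]. rewrite plus_INR in *. simpl INR in *.
    destruct (Rlt_dec (1 + INR m) X) as [h|h]; split; try lra.
    all: rewrite ?plus_INR; simpl INR.
    - lra.
    - assert (0 <= (X - (1 + INR m)) * c) by (apply Rmult_le_pos; lra). lra.
    - assert (0 <= INR m) by apply pos_INR. lra.
Qed.

Definition w (j : nat) : R := / ln (INR j + 3) ^ 2.

Lemma inv_le_helper a b k : 0 < a -> 0 < b -> a <= k * b -> / b <= k * / a.
Proof.
  intros Ha Hb H.
  assert (Hia : 0 < / a) by (apply Rinv_0_lt_compat; lra).
  assert (Hib : 0 < / b) by (apply Rinv_0_lt_compat; lra).
  assert (E1 : a * / a = 1) by (field; lra).
  assert (E2 : b * / b = 1) by (field; lra).
  assert (H' : a * (/ a * / b) <= k * b * (/ a * / b)).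
  { apply Rmult_le_compat_r; [nra|exact H]. }
  replace (a * (/ a * / b)) with (/ b) in H' by (rewrite <- Rmult_assoc, E1; ring).
  replace (k * b * (/ a * / b)) with (k * / a) in H' by
     (replace (k * b * (/ a * / b)) with (k * / a * (b * / b)) by ring; rewrite E2; ring).
  exact H'.
Qed.

Lemma ln3_ge1 : 1 <= ln 3.
Proof.
  rewrite <- ln_exp with 1. destruct (Req_dec (exp 1) 3) as [E|E].
  - rewrite E; lra.
  - left; apply ln_increasing; [apply exp_pos|]. pose proof exp_le_3; lra.
Qed.

Lemma lnj_ge1 j : 1 <= ln (INR j + 3).
Proof.
  eapply Rle_trans; [apply ln3_ge1|]. pose proof (pos_INR j).
  destruct (Req_dec (INR j) 0) as [E|E]. rewrite E; replace (0+3) with 3 by ring; lra.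
  left; apply ln_increasing; lra.
Qed.

Lemma w_pos j : 0 < w j.
Proof. unfold w. apply Rinv_0_lt_compat. pose proof (lnj_ge1 j). nra. Qed.

Lemma w_le1 j : w j <= 1.
Proof. unfold w. pose proof (lnj_ge1 j). rewrite <- Rinv_1. apply Rinv_le_contravar; nra. Qed.

Lemma w_anti i j : (i <= j)%nat -> w j <= w i.
Proof.
  intros H. unfold w. apply Rinv_le_contravar. pose proof (lnj_ge1 i); nra.
  pose proof (lnj_ge1 i). pose proof (lnj_ge1 j).
  assert (ln (INR i + 3) <= ln (INR j + 3)).
  { apply le_INR in H. destruct (Req_dec (INR i) (INR j)) as [E|E]. rewrite E; lra.
    left; apply ln_increasing; pose proof (pos_INR i); lra. }
  nra.
Qed.

Lemma exp_cube y : 0 <= y -> y ^ 3 / 216 <= exp (y / 2).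
Proof.
  intros Hy.
  replace (exp (y/2)) with (exp (y/6) ^ 3).
  2:{ simpl. rewrite Rmult_1_r, <- !exp_plus. f_equal; field. }
  assert (H6 : y / 6 <= exp (y/6)).
  { destruct (Req_dec (y/6) 0) as [E|E]. rewrite E, exp_0; lra.
    pose proof (exp_ineq1 (y/6) E). lra. }
  assert (0 <= y/6) by lra.
  replace (y ^ 3 / 216) with ((y/6)^3) by field.
  apply pow_incr; lra.
Qed.

Lemma pointwise (m j : nat) K c :
  let l := ln (INR m + 3) in
  0 < K -> 0 < c <= 1/2 -> 3 * K / c <= l -> (1 <= j <= m)%nat ->
  w j - w m <= (if Rlt_dec (INR j) (exp (l/2)) then 1 else 0)
             + (if Rlt_dec (INR j) (exp (l - K)) then 4 * w m else 0) + c * w m.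
Proof.
  intros l HK Hc Hl Hj.
  assert (Hx1 := lnj_ge1 j). assert (Hl1 := lnj_ge1 m). fold l in Hl1.
  set (x := ln (INR j + 3)) in *.
  assert (Hwj := w_pos j). assert (Hwm := w_pos m).
  assert (HjR : 1 <= INR j <= INR m) by (split; [apply (le_INR 1) | apply le_INR]; lia).
  assert (Hexl : exp l = INR m + 3) by (unfold l; apply exp_ln; lra).
  assert (Hwm' : w m = / l ^ 2) by reflexivity.
  assert (Hwj' : w j = / x ^ 2) by reflexivity.
  assert (0 <= c * w m) by (apply Rmult_le_pos; lra).
  destruct (Rlt_dec (INR j) (exp (l/2))) as [h1|h1].
  - pose proof (w_le1 j). destruct (Rlt_dec (INR j) (exp (l - K))); lra.
  - assert (Hx2 : l / 2 < x).
    { unfold x. rewrite <- (ln_exp (l/2)). apply ln_increasing. apply exp_pos. lra. }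
    destruct (Rlt_dec (INR j) (exp (l - K))) as [h2|h2].
    + assert (w j <= 4 * w m).
      { rewrite Hwj', Hwm'. apply inv_le_helper; try nra. }
      lra.
    + assert (Hx3 : l - K < x).
      { unfold x. rewrite <- (ln_exp (l - K)). apply ln_increasing. apply exp_pos. lra. }
      assert (HK' : K <= l * (c / 3)).
      { apply Rmult_le_compat_r with (r := c/3) in Hl; [|lra].
        replace (3 * K / c * (c / 3)) with K in Hl by (field; lra). lra. }
      assert (Hx4 : l * (1 - c/3) <= x) by lra.
      assert (Hx5 : (l * (1 - c/3)) ^ 2 <= x ^ 2).
      { apply pow_incr. split; [|lra]. apply Rmult_le_pos; lra. }
      assert (w j <= (1 + c) * w m).
      { rewrite Hwj', Hwm'. apply inv_le_helper; try nra. }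
      lra.
Qed.

Lemma log_lemma eta : 0 < eta -> exists M, 0 < M /\ forall m : nat, M < INR m ->
  LS (seq 1 m) (fun j => w j - w m) <= eta * INR m * w m.
Proof.
  intros He.
  set (c := Rmin (1/2) (eta/3)).
  assert (Hc : 0 < c <= 1/2) by (unfold c; unfold Rmin; destruct Rle_dec; lra).
  assert (Hc2 : c <= eta / 3) by (unfold c; apply Rmin_r).
  set (K := 24 / eta). assert (HK : 0 < K) by (unfold K; apply Rdiv_lt_0_compat; lra).
  set (Lam := Rmax (1296 / eta) (Rmax (3 * K / c) 1)).
  exists (exp Lam + 3). split. pose proof (exp_pos Lam); lra.
  intros m Hm.
  set (l := ln (INR m + 3)).
  assert (Hexl : exp l = INR m + 3) by (unfold l; apply exp_ln; pose proof (pos_INR m); lra).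
  assert (Hl : Lam < l).
  { unfold l. rewrite <- (ln_exp Lam). apply ln_increasing. apply exp_pos. lra. }
  assert (HL1 : 1296 / eta <= Lam) by (unfold Lam; apply Rmax_l).
  assert (HL2 : 3 * K / c <= Lam) by (unfold Lam; eapply Rle_trans; [|apply Rmax_r]; apply Rmax_l).
  assert (HL3 : 1 <= Lam) by (unfold Lam; eapply Rle_trans; [|apply Rmax_r]; apply Rmax_r).
  assert (Hm3 : 3 <= INR m) by (pose proof (exp_pos Lam); lra).
  assert (Hwm : w m = / l ^ 2) by reflexivity.
  assert (Hlw : l ^ 2 * w m = 1) by (rewrite Hwm; field; lra).
  assert (Hwm0 := w_pos m).
  eapply Rle_trans.
  { apply LS_le. intros j Hj. apply in_seq in Hj.
    apply (pointwise m j K c); try lra; try lia. fold l; lra. }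
  rewrite !LS_plus, LS_const, length_seq.
  pose proof (LS_count m (exp (l/2)) 1 ltac:(lra) ltac:(left; apply exp_pos)) as C1.
  pose proof (LS_count m (exp (l - K)) (4 * w m) ltac:(lra) ltac:(left; apply exp_pos)) as C2.
  assert (B1 : INR m * (c * w m) <= eta / 3 * INR m * w m).
  { replace (eta / 3 * INR m * w m) with (INR m * (eta/3 * w m)) by ring.
    apply Rmult_le_compat_l; [lra|]. apply Rmult_le_compat_r; lra. }
  assert (B2 : exp (l - K) * (4 * w m) <= eta / 3 * INR m * w m).
  { assert (EK : 1 + K < exp K) by (apply exp_ineq1; lra).
    assert (Hel : exp (l - K) = (INR m + 3) / exp K).
    { unfold Rminus. rewrite exp_plus, exp_Ropp, Hexl. reflexivity. }
    assert (HeK : 0 < exp K) by apply exp_pos.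
    assert (H24 : (INR m + 3) / exp K <= (INR m + 3) * (eta / 24)).
    { replace (eta / 24) with (/ K) by (unfold K; field; lra).
      unfold Rdiv. apply Rmult_le_compat_l; [lra|].
      apply Rinv_le_contravar; lra. }
    rewrite Hel.
    replace (eta / 3 * INR m * w m) with ((eta / 3 * INR m) * w m) by ring.
    replace ((INR m + 3) / exp K * (4 * w m)) with (((INR m + 3) / exp K * 4) * w m) by ring.
    apply Rmult_le_compat_r; [lra|]. nra. }
  assert (B3 : exp (l / 2) * 1 <= eta / 3 * INR m * w m).
  { set (E := exp (l/2)).
    assert (HE : 0 < E) by apply exp_pos.
    assert (HE2 : E * E = INR m + 3) by (unfold E; rewrite <- exp_plus, <- Hexl; f_equal; field).
    assert (Hcube : l ^ 3 / 216 <= E) by (apply exp_cube; lra).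
    assert (Hel : 1296 <= eta * l).
    { assert (HL1' : 1296 / eta <= l) by lra.
      apply Rmult_le_compat_l with (r := eta) in HL1'; [|lra].
      replace (eta * (1296 / eta)) with 1296 in HL1' by (field; lra). lra. }
    assert (H6 : 6 * l ^ 2 <= eta * E).
    { assert (eta * (l ^ 3 / 216) <= eta * E) by (apply Rmult_le_compat_l; lra).
      replace (eta * (l ^ 3 / 216)) with (l ^ 2 * (eta * l) / 216) in H by (field).
      assert (0 <= l^2) by (apply pow_le; lra). nra. }
    assert (Hm2 : E * E / 2 <= INR m) by lra.
    assert (E * (6 * l ^ 2) <= E * (eta * E)) by (apply Rmult_le_compat_l; lra).
    assert (E * (6 * l ^ 2) * w m <= E * (eta * E) * w m) by (apply Rmult_le_compat_r; lra).
    replace (E * (6 * l ^ 2) * w m) with (6 * E * (l^2 * w m)) in H0 by ring.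
    rewrite Hlw in H0.
    assert (eta * (E * E / 2) * w m <= eta * INR m * w m).
    { apply Rmult_le_compat_r; [lra|]. apply Rmult_le_compat_l; lra. }
    nra. }
  fold l; lra.
Qed.

Definition glip (h : R -> R) (L : R) := 0 <= L /\ forall x y, Rabs (h x - h y) <= L * Rabs (x - y).

Lemma glip_cont h L : glip h L -> forall x, continuous h x.
Proof.
  intros [HL H] x. apply continuity_pt_filterlim.
  intros eps Heps. exists (eps / (L + 1)). split. apply Rdiv_lt_0_compat; lra.
  intros y [_ Hy]. simpl in *. unfold Rdist, R_dist in *.
  eapply Rle_lt_trans; [apply H|].
  apply Rle_lt_trans with (L * (eps / (L+1))).
  apply Rmult_le_compat_l; lra.
  apply Rmult_lt_reg_r with (L+1); [lra|].
  replace (L * (eps / (L + 1)) * (L + 1)) with (L * eps) by (field; lra). nra.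
Qed.

Lemma glip_exRInt h L a b : glip h L -> ex_RInt h a b.
Proof. intros H; apply (@ex_RInt_continuous R_CompleteNormedModule); intros; eapply glip_cont; eauto. Qed.

Lemma RInt_R_minus h a b c : ex_RInt h a b ->
  RInt (fun t => h t - c) a b = RInt h a b - (b - a) * c.
Proof.
  intros H. rewrite (RInt_minus h (fun _ => c)); [|exact H|apply ex_RInt_const].
  rewrite RInt_const. reflexivity.
Qed.

Lemma RInt_R_chasles h a b c : ex_RInt h a b -> ex_RInt h b c ->
  RInt h a b + RInt h b c = RInt h a c.
Proof. intros H1 H2. apply (RInt_Chasles h a b c H1 H2). Qed.

Lemma step_bound h L p q : glip h L -> p <= q ->
  Rabs (h q * (q - p) - RInt h p q) <= (q - p) * (L * (q - p)).
Proof.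
  intros HL Hpq.
  assert (Hex := glip_exRInt h L p q HL).
  assert (E : h q * (q - p) - RInt h p q = - RInt (fun t => h t - h q) p q).
  { rewrite RInt_R_minus; [ring|exact Hex]. }
  rewrite E, Rabs_Ropp. apply abs_RInt_le_const; [exact Hpq| |].
  - apply (@ex_RInt_minus R_CompleteNormedModule); [exact Hex| apply ex_RInt_const].
  - intros t Ht. destruct HL as [HL0 HL]. eapply Rle_trans; [apply HL|].
    apply Rmult_le_compat_l; [lra|]. unfold Rabs; destruct Rcase_abs; lra.
Qed.

Lemma riemann h L (m : nat) : glip h L -> 0 < INR m -> forall a n : nat,
  Rabs (LS (seq (a+1) n) (fun j => h (INR j / INR m))
        - INR m * RInt h (INR a / INR m) (INR (a + n) / INR m)) <= INR n * L / INR m.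
Proof.
  intros HL Hm a n. induction n as [|n IH].
  - rewrite Nat.add_0_r, RInt_point.
    assert (Hz : forall x y : R, x = 0 -> y = 0 -> Rabs (x - INR m * y) <= INR 0 * L / INR m).
    { intros x y -> ->. simpl INR. replace (0 - INR m * 0) with 0 by ring.
      rewrite Rabs_R0. unfold Rdiv. rewrite !Rmult_0_l. lra. }
    apply Hz; reflexivity.
  - replace (S n) with (n + 1)%nat by lia. rewrite seq_app, LS_app.
    replace (LS (seq (a + 1 + n) 1) (fun j => h (INR j / INR m)))
      with (h (INR (a + n + 1) / INR m)).
    2:{ unfold LS; simpl. replace (a + 1 + n)%nat with (a + n + 1)%nat by lia. ring. }
    set (p := INR (a + n) / INR m). set (q := INR (a + (n + 1)) / INR m).
    assert (Hq : INR (a + n + 1) / INR m = q) by (unfold q; f_equal; f_equal; lia).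
    rewrite Hq.
    assert (Hqp : q - p = / INR m).
    { unfold q, p. rewrite Nat.add_assoc, plus_INR. simpl INR. field. lra. }
    rewrite <- (RInt_R_chasles h _ p q); try (eapply glip_exRInt; eauto).
    pose proof (step_bound h L p q HL ltac:(pose proof (Rinv_0_lt_compat _ Hm); lra)) as S.
    rewrite Hqp in S.
    assert (S' : Rabs (h q - INR m * RInt h p q) <= L / INR m).
    { replace (h q - INR m * RInt h p q) with (INR m * (h q * / INR m - RInt h p q))
        by (field; lra).
      rewrite Rabs_mult, Rabs_pos_eq by lra.
      apply Rmult_le_compat_l with (r := INR m) in S; [|lra].
      eapply Rle_trans; [exact S|]. right; field; lra. }
    fold p in IH.
    replace (LS (seq (a + 1) n) (fun j => h (INR j / INR m)) + h q -
      INR m * (RInt h (INR a / INR m) p + RInt h p q))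
     with ((LS (seq (a + 1) n) (fun j => h (INR j / INR m)) - INR m * RInt h (INR a / INR m) p)
           + (h q - INR m * RInt h p q)) by ring.
    eapply Rle_trans; [apply Rabs_triang|].
    rewrite plus_INR. simpl INR.
    replace ((INR n + 1) * L / INR m) with (INR n * L / INR m + L / INR m) by (field; lra).
    lra.
Qed.

Definition cl (x : R) : R := Rmax 0 (Rmin 1 x).

Lemma cl_id x : 0 <= x <= 1 -> cl x = x.
Proof. intros H; unfold cl, Rmax, Rmin; repeat destruct Rle_dec; lra. Qed.

Lemma cl_range x : 0 <= cl x <= 1.
Proof. unfold cl, Rmax, Rmin; repeat destruct Rle_dec; lra. Qed.

Lemma cl_lip x y : Rabs (cl x - cl y) <= Rabs (x - y).
Proof. unfold cl, Rmax, Rmin, Rabs; repeat destruct Rle_dec; repeat destruct Rcase_abs; lra. Qed.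

Lemma clamp_glip f : lipschitz01 f -> exists L, glip (fun x => f (cl x)) L.
Proof.
  intros [L HL]. exists (Rabs L). split; [apply Rabs_pos|]. intros x y.
  eapply Rle_trans; [apply HL; apply cl_range|].
  eapply Rle_trans; [apply Rmult_le_compat_r; [apply Rabs_pos|apply RRle_abs]|].
  apply Rmult_le_compat_l; [apply Rabs_pos|apply cl_lip].
Qed.

Lemma clamp_RInt (f : R -> R) a b : 0 <= a <= 1 -> 0 <= b <= 1 ->
  RInt (fun x => f (cl x)) a b = RInt f a b.
Proof.
  intros Ha Hb. apply (@RInt_ext R_CompleteNormedModule). intros x [H1 H2].
  assert (0 <= Rmin a b) by (apply Rmin_glb; lra).
  assert (Rmax a b <= 1) by (apply Rmax_lub; lra).
  rewrite cl_id; [reflexivity|lra].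
Qed.

Lemma RInt_bound h L B a b : glip h L -> (forall x, Rabs (h x) <= B) ->
  Rabs (RInt h a b) <= Rabs (b - a) * B.
Proof.
  intros HL HB. destruct (Rle_dec a b) as [Hab|Hab].
  - rewrite (Rabs_pos_eq (b - a)) by lra. apply abs_RInt_le_const; auto. eapply glip_exRInt; eauto.
  - rewrite <- (opp_RInt_swap h b a) by (eapply glip_exRInt; eauto). change (opp (RInt h b a)) with (- RInt h b a).
    rewrite Rabs_Ropp, (Rabs_left (b - a)) by lra. replace (- (b - a)) with (a - b) by ring.
    apply abs_RInt_le_const; [lra| |auto]. eapply glip_exRInt; eauto.
Qed.

Lemma jm_range (j m : nat) : (j <= m)%nat -> 0 < INR m -> 0 <= INR j / INR m <= 1.
Proof.
  intros H Hm. apply le_INR in H. pose proof (pos_INR j). split.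
  apply Rdiv_le_0_compat; lra.
  apply Rmult_le_reg_r with (INR m); [lra|]. unfold Rdiv. rewrite Rmult_assoc, Rinv_l; lra.
Qed.

Lemma errbound (l : list nat) (m : nat) (g : R -> R) B : 0 < INR m ->
  (forall j, In j l -> (1 <= j <= m)%nat) ->
  (forall x, 0 <= x <= 1 -> Rabs (g x) <= B) ->
  Rabs (LS l (fun j => (w j - w m) * g (INR j / INR m))) <= B * LS l (fun j => w j - w m).
Proof.
  intros Hm Hl Hg. eapply Rle_trans; [apply LS_abs|]. rewrite <- LS_scal.
  apply LS_le. intros j Hj. specialize (Hl j Hj).
  assert (Hw : w m <= w j) by (apply w_anti; lia).
  rewrite Rabs_mult, Rabs_pos_eq by lra. rewrite Rmult_comm.
  apply Rmult_le_compat_r; [lra|]. apply Hg, jm_range; lia || lra.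
Qed.

Lemma LS_close (l : list nat) (m : nat) (g h : R -> R) r : 0 < INR m ->
  (forall j, In j l -> (1 <= j <= m)%nat) ->
  (forall x, 0 <= x <= 1 -> Rabs (h x - g x) <= r) ->
  LS l (fun j => h (INR j / INR m)) - INR (length l) * r <= LS l (fun j => g (INR j / INR m))
  <= LS l (fun j => h (INR j / INR m)) + INR (length l) * r.
Proof.
  intros Hm Hl Hhg. rewrite <- LS_const. rewrite <- LS_minus, <- LS_plus. split; apply LS_le;
  intros j Hj; specialize (Hl j Hj);
  assert (Hr : 0 <= INR j / INR m <= 1) by (apply jm_range; lia || lra);
  specialize (Hhg _ Hr); unfold Rabs in Hhg; destruct Rcase_abs in Hhg; lra.
Qed.

Lemma abs_bd x c : Rabs x <= c -> - c <= x <= c.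
Proof. unfold Rabs; destruct Rcase_abs; lra. Qed.

Lemma per_f (f : R -> R) B :
  0 < B -> (forall x, 0 <= x <= 1 -> Rabs (f x) <= B) -> lipschitz01 f ->
  0 < RInt f (1/2) 1 - RInt f 0 (1/2) ->
  exists M eps, 0 < M /\ 0 < eps /\ forall (m k : nat), M < INR m ->
    (1/2 - eps) * INR m < INR k < (1/2 + eps) * INR m ->
    forall g, (forall x, 0 <= x <= 1 -> Rabs (g x) <= B) ->
    unif_ball f ((RInt f (1/2) 1 - RInt f 0 (1/2)) / 4) g ->
    wsum g m 1 k < wsum g m (S k) m.
Proof.
  intros HB Hf Hlip Hd.
  set (d := RInt f (1/2) 1 - RInt f 0 (1/2)) in *.
  destruct (clamp_glip f Hlip) as [L HL].
  set (h := fun x => f (cl x)) in *.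
  assert (Hhb : forall x, Rabs (h x) <= B) by (intros x; apply Hf, cl_range).
  assert (Hhf : forall x, 0 <= x <= 1 -> h x = f x) by (intros x Hx; unfold h; rewrite cl_id; auto).
  destruct (log_lemma (d / (8 * B))) as [M0 [HM0 HM0']].
  { apply Rdiv_lt_0_compat; lra. }
  set (eps := Rmin (1/4) (d / (8 * B))).
  assert (Heps : 0 < eps) by (unfold eps, Rmin; destruct Rle_dec; [lra|apply Rdiv_lt_0_compat; lra]).
  assert (Heps1 : eps <= 1/4) by apply Rmin_l.
  assert (Heps2 : eps * B <= d / 8).
  { apply Rle_trans with (d / (8 * B) * B). apply Rmult_le_compat_r; [lra|apply Rmin_r].
    right; field; lra. }
  exists (Rmax M0 (Rmax (8 * L / d) 1)), eps. split; [|split; [exact Heps|]].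
  { eapply Rlt_le_trans; [|apply Rmax_r]. eapply Rlt_le_trans; [|apply Rmax_r]. lra. }
  intros m k Hm Hk g Hg [r' [Hr' Hgf]].
  assert (Hm0 : M0 < INR m) by (eapply Rle_lt_trans; [apply Rmax_l|exact Hm]).
  assert (HmL : 8 * L / d < INR m).
  { eapply Rle_lt_trans; [|exact Hm]. eapply Rle_trans; [|apply Rmax_r]. apply Rmax_l. }
  assert (Hm1 : 1 < INR m).
  { eapply Rle_lt_trans; [|exact Hm]. eapply Rle_trans; [|apply Rmax_r]. apply Rmax_r. }
  assert (Hmpos : 0 < INR m) by lra.
  assert (Hkm : (k <= m)%nat).
  { assert (INR k < INR m) by nra. apply INR_lt in H. lia. }
  assert (HkmR : INR k <= INR m) by (apply le_INR; exact Hkm).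
  assert (Hk0 : 0 <= INR k) by apply pos_INR.
  assert (HX : Rabs (INR k / INR m - 1/2) <= eps).
  { assert (E : INR k / INR m - 1/2 = (INR k - INR m / 2) / INR m) by (field; lra).
    rewrite E. unfold Rdiv at 1. rewrite Rabs_mult, (Rabs_pos_eq (/ INR m)).
    2:{ left; apply Rinv_0_lt_compat; lra. }
    apply Rmult_le_reg_r with (INR m); [lra|]. rewrite Rmult_assoc, Rinv_l by lra.
    unfold Rabs; destruct Rcase_abs; nra. }
  assert (HL0 : 0 <= L) by (destruct HL; auto).
  assert (W1 : wsum g m 1 k = w m * LS (seq 1 k) (fun j => g (INR j / INR m))
                 + LS (seq 1 k) (fun j => (w j - w m) * g (INR j / INR m))).
  { unfold wsum; rewrite sum_from_to_LS. replace (S k - 1)%nat with k by lia.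
    rewrite <- LS_scal, <- LS_plus. apply LS_ext; intros; unfold w; ring. }
  assert (W2 : wsum g m (S k) m = w m * LS (seq (k+1) (m - k)) (fun j => g (INR j / INR m))
                 + LS (seq (k+1) (m-k)) (fun j => (w j - w m) * g (INR j / INR m))).
  { unfold wsum; rewrite sum_from_to_LS. replace (S m - S k)%nat with (m - k)%nat by lia.
    replace (S k) with (k + 1)%nat by lia.
    rewrite <- LS_scal, <- LS_plus. apply LS_ext; intros; unfold w; ring. }
  rewrite W1, W2.
  assert (In1 : forall j, In j (seq 1 k) -> (1 <= j <= m)%nat) by (intros j Hj; apply in_seq in Hj; lia).
  assert (In2 : forall j, In j (seq (k+1) (m-k)) -> (1 <= j <= m)%nat) by (intros j Hj; apply in_seq in Hj; lia).
  pose proof (errbound _ m g B Hmpos In1 Hg) as E1.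
  pose proof (errbound _ m g B Hmpos In2 Hg) as E2.
  assert (Esum : LS (seq 1 k) (fun j => w j - w m) + LS (seq (k+1) (m-k)) (fun j => w j - w m)
                 <= d / (8 * B) * INR m * w m).
  { rewrite <- LS_app. replace (k+1)%nat with (1 + k)%nat by lia. rewrite <- seq_app.
    replace (k + (m - k))%nat with m by lia. apply HM0'; lra. }
  assert (Hhg : forall x, 0 <= x <= 1 -> Rabs (h x - g x) <= r').
  { intros x Hx. rewrite Hhf by exact Hx. apply Hgf, Hx. }
  pose proof (LS_close _ m g h r' Hmpos In1 Hhg) as C1.
  pose proof (LS_close _ m g h r' Hmpos In2 Hhg) as C2.
  rewrite !length_seq in C1, C2.
  pose proof (riemann h L m HL Hmpos 0 k) as R1.
  pose proof (riemann h L m HL Hmpos k (m - k)) as R2.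
  simpl (0 + 1)%nat in R1. simpl (0 + k)%nat in R1. simpl (INR 0) in R1.
  replace (k + (m - k))%nat with m in R2 by lia.
  replace (0 / INR m) with 0 in R1 by (field; lra).
  replace (INR m / INR m) with 1 in R2 by (field; lra).
  rewrite minus_INR in R2 by exact Hkm.
  set (X := INR k / INR m) in *.
  assert (HX01 : 0 <= X <= 1) by (apply jm_range; lia || lra).
  assert (Ch1 : RInt h 0 (1/2) + RInt h (1/2) X = RInt h 0 X)
    by (apply RInt_R_chasles; eapply glip_exRInt; eauto).
  assert (Ch2 : RInt h (1/2) X + RInt h X 1 = RInt h (1/2) 1)
    by (apply RInt_R_chasles; eapply glip_exRInt; eauto).
  assert (Cf1 : RInt h 0 (1/2) = RInt f 0 (1/2)) by (apply clamp_RInt; lra).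
  assert (Cf2 : RInt h (1/2) 1 = RInt f (1/2) 1) by (apply clamp_RInt; lra).
  pose proof (RInt_bound h L B (1/2) X HL Hhb) as IB.
  assert (IB' : Rabs (RInt h (1/2) X) <= d / 8).
  { eapply Rle_trans; [exact IB|]. eapply Rle_trans; [|exact Heps2].
    apply Rmult_le_compat_r; lra. }
  set (U1 := LS (seq 1 k) (fun j => g (INR j / INR m))) in *.
  set (U2 := LS (seq (k+1) (m-k)) (fun j => g (INR j / INR m))) in *.
  assert (HLm : L < INR m * d / 8).
  { apply Rmult_lt_compat_r with (r := d / 8) in HmL; [|lra].
    replace (8 * L / d * (d / 8)) with L in HmL by (field; lra). lra. }
  assert (Hsplit1 : INR k * L / INR m + (INR m - INR k) * L / INR m = L) by (field; lra).
  assert (Hmd : INR m * r' <= INR m * (d/4)) by (apply Rmult_le_compat_l; lra).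
  assert (HU : 3 * (INR m * d) / 8 < U2 - U1).
  { apply Rabs_le_between' in R1. apply Rabs_le_between' in R2.
    apply abs_bd in IB'.
    assert (INR m * RInt h X 1 - INR m * RInt h 0 X = INR m * d - 2 * (INR m * RInt h (1/2) X)).
    { unfold d. rewrite <- Cf1, <- Cf2, <- Ch1, <- Ch2. ring. }
    assert (INR m * RInt h (1/2) X <= INR m * (d/8)) by (apply Rmult_le_compat_l; lra).
    assert (INR k * r' + (INR m - INR k) * r' = INR m * r') by ring.
    rewrite minus_INR in C2 by exact Hkm.
    lra. }
  assert (Hwm := w_pos m).
  assert (HBE : B * (LS (seq 1 k) (fun j => w j - w m) + LS (seq (k+1) (m-k)) (fun j => w j - w m))
                <= INR m * d / 8 * w m).
  { apply Rmult_le_compat_l with (r := B) in Esum; [|lra].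
    eapply Rle_trans; [exact Esum|]. right; field; lra. }
  assert (HwU : w m * (3 * (INR m * d) / 8) < w m * (U2 - U1)) by (apply Rmult_lt_compat_l; lra).
  apply abs_bd in E1. apply abs_bd in E2.
  assert (0 < INR m * d / 8 * w m).
  { apply Rmult_lt_0_compat; [|lra]. apply Rdiv_lt_0_compat; [|lra]. apply Rmult_lt_0_compat; lra. }
  nra.
Qed.

Definition Pr (F : (R -> R) -> Prop) (U : (R -> R) -> (R -> R) -> Prop) (M eps : R) (i : R -> R) : Prop :=
  forall (m k : nat), M < INR m -> (1/2 - eps) * INR m < INR k < (1/2 + eps) * INR m ->
    forall g, F g -> U i g -> wsum g m 1 k < wsum g m (S k) m.

Lemma Pr_mono F U M eps M' eps' i : Pr F U M eps i -> M <= M' -> 0 < eps' <= eps -> Pr F U M' eps' i.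
Proof.
  intros H HM He m k Hm Hk g Fg Hg. apply H; auto; [lra|].
  pose proof (pos_INR m).
  assert (eps' * INR m <= eps * INR m) by (apply Rmult_le_compat_r; lra). nra.
Qed.

Lemma combine F U (l : list (R -> R)) :
  (forall i, exists M eps, 0 < M /\ 0 < eps /\ Pr F U M eps i) ->
  exists M eps, 0 < M /\ 0 < eps /\ forall i, In i l -> Pr F U M eps i.
Proof.
  intros Hi. induction l as [|i l IH].
  - exists 1, 1. repeat split; try lra. intros i [].
  - destruct IH as [M1 [e1 [HM1 [He1 H1]]]].
    destruct (Hi i) as [M2 [e2 [HM2 [He2 H2]]]].
    exists (Rmax M1 M2), (Rmin e1 e2). split; [eapply Rlt_le_trans; [exact HM1|apply Rmax_l]|].
    split; [unfold Rmin; destruct Rle_dec; lra|].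
    assert (0 < Rmin e1 e2) by (unfold Rmin; destruct Rle_dec; lra).
    intros j [<-|Hj].
    + eapply Pr_mono; [exact H2|apply Rmax_r|split; [lra|apply Rmin_r]].
    + eapply Pr_mono; [exact (H1 j Hj)|apply Rmax_l|split; [lra|apply Rmin_l]].
Qed.

Theorem claim13 (F : (R -> R) -> Prop) :
  unif_compact F ->
  (exists B : R, forall f, F f -> forall x, 0 <= x <= 1 -> Rabs (f x) <= B) ->
  (forall f, F f -> lipschitz01 f) ->
  (forall f, F f -> RInt f 0 (1/2) < RInt f (1/2) 1) ->
  exists M eps : R, 0 < M /\ 0 < eps /\
    forall (m mstar : nat), M < INR m ->
      (1/2 - eps) * INR m < INR mstar < (1/2 + eps) * INR m ->
      forall f, F f -> wsum f m 1 mstar < wsum f m (S mstar) m.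
Proof.
  intros Hcomp [B0 HB0] Hlip Hint.
  set (B := Rabs B0 + 1).
  assert (HB : forall f, F f -> forall x, 0 <= x <= 1 -> Rabs (f x) <= B).
  { intros f Ff x Hx. specialize (HB0 f Ff x Hx). pose proof (RRle_abs B0). unfold B; lra. }
  assert (HBp : 0 < B) by (unfold B; pose proof (Rabs_pos B0); lra).
  set (dl := fun f : R -> R => RInt f (1/2) 1 - RInt f 0 (1/2)).
  set (U := fun f g : R -> R => F f /\ unif_ball f (dl f / 4) g).
  destruct (Hcomp (R -> R) U) as [l Hl].
  - intros f g [Ff [r' [Hr' Hfg]]]. exists (dl f / 4 - r'). split; [lra|].
    intros h [r'' [Hr'' Hgh]]. split; [exact Ff|]. exists (r' + r''). split; [lra|].
    intros x Hx. replace (f x - h x) with ((f x - g x) + (g x - h x)) by ring.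
    eapply Rle_trans; [apply Rabs_triang|]. specialize (Hfg x Hx). specialize (Hgh x Hx). lra.
  - intros f Ff. exists f. split; [exact Ff|]. exists 0. split.
    + specialize (Hint f Ff). unfold dl. lra.
    + intros x _. replace (f x - f x) with 0 by ring. rewrite Rabs_R0; lra.
  - destruct (combine F U l) as [M [eps [HM [He HP]]]].
    + intros i. destruct (classic (F i)) as [Fi|nFi].
      * destruct (per_f i B HBp (HB i Fi) (Hlip i Fi)) as [M [eps [HM [He HP]]]].
        { specialize (Hint i Fi). lra. }
        exists M, eps. split; [exact HM|]. split; [exact He|].
        intros m k Hm Hk g Fg [Fi' Hball]. apply (HP m k Hm Hk g (HB g Fg) Hball).
      * exists 1, 1. split; [lra|]. split; [lra|]. intros m k _ _ g _ [Fi _]. contradiction.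
    + exists M, eps. split; [exact HM|]. split; [exact He|].
      intros m k Hm Hk f Ff. destruct (Hl f Ff) as [i [Hi HUi]].
      exact (HP i Hi m k Hm Hk f Ff HUi).
Qed.
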